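(* Let $(A^{\mathbb{Z}},T)$ be the Pacman cellular automaton and let $w\in A^{+}$ be a nonempty finite word. For each integer $i\geq 0$ define $$x^{i}= {}^{\infty}\mathtt{0}\,.\,w\,\mathtt{1}\,\mathtt{0}^{i}\,\mathtt{K}\,\mathtt{0}^{\infty},$$ that is, $x^i$ has the word $w$ starting at coordinate $0$, followed immediately by the symbol $\mathtt{1}$, then $i$ copies of $\mathtt{0}$, then the symbol $\mathtt{K}$, and all other coordinates equal to $\mathtt{0}$. Then there exist integers $N,M\geq 0$ such that for every integer $j\geq 0$, $$(T^{N+j}x^{M+j})_{0}\in\{\mathtt{G},\mathtt{K},\mathtt{D}\}.$$
   Context: Let $A=\{\mathtt{0},\mathtt{1},\mathtt{G},\mathtt{K},\mathtt{P},\mathtt{D}\}$ (intended meanings: $\mathtt{0}$ empty space, $\mathtt{1}$ empty door, $\mathtt{G}$ ghost, $\mathtt{K}$ keymaster ghost, $\mathtt{P}$ pacman, $\mathtt{D}$ door with ghost). $A^{+}$ denotes the set of nonempty finite words over $A$. The Pacman CA is the map $T:A^{\mathbb{Z}}\to A^{\mathbb{Z}}$ defined coordinatewise as follows, writing $a=x_{i-1}$, $b=x_i$, $c=x_{i+1}$: - $(Tx)_i=\mathtt{0}$ if $\big(a\in\{\mathtt{0},\mathtt{G},\mathtt{K}\}\wedge[(b\in\{\mathtt{0},\mathtt{G},\mathtt{K}\}\wedge c\in\{\mathtt{0},\mathtt{1},\mathtt{P}\})\vee(b=\mathtt{P}\wedge c\notin\{\mathtt{1},\mathtt{D}\})]\big)\vee\big(a\in\{\mathtt{1},\mathtt{D}\}\wedge[(b\in\{\mathtt{0},\mathtt{K}\}\wedge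 c\in\{\mathtt{0},\mathtt{1},\mathtt{P}\})\vee(b=\mathtt{P}\wedge c\notin\{\mathtt{1},\mathtt{D}\})]\big)$; - $(Tx)_i=\mathtt{1}$ if $b\in\{\mathtt{1},\mathtt{D}\}\wedge c\notin\{\mathtt{K},\mathtt{D}\}$; - $(Tx)_i=\mathtt{G}$ if $(a\in\{\mathtt{0},\mathtt{G},\mathtt{K}\}\wedge b\in\{\mathtt{0},\mathtt{G},\mathtt{K}\}\wedge c\in\{\mathtt{G},\mathtt{D}\})\vee(a\in\{\mathtt{1},\mathtt{D}\}\wedge b\in\{\mathtt{0},\mathtt{K}\}\wedge c=\mathtt{D})$; - $(Tx)_i=\mathtt{K}$ if $\big(c=\mathtt{K}\wedge[(a\in\{\mathtt{0},\mathtt{G},\mathtt{K}\}\wedge b\in\{\mathtt{0},\mathtt{G},\mathtt{K}\})\vee(a\in\{\mathtt{1},\mathtt{D}\}\wedge b\in\{\mathtt{0},\mathtt{K}\})]\big)\vee(a=\mathtt{P}\wedge b\notin\{\mathtt{1},\mathtt{D}\}\wedge c\in\{\mathtt{1},\mathtt{D}\})\vee(b=\mathtt{P}\wedge c\in\{\mathtt{1},\mathtt{D}\})$; - $(Tx)_i=\mathtt{P}$ if $\big(a=\mathtt{1}\wedge[(b\in\{\mathtt{0},\mathtt{K}\}\wedge c=\mathtt{G})\vee b=\mathtt{G}]\big)\vee(a=\mathtt{P}\wedge b\notin\{\mathtt{1},\mathtt{D}\}\wedge c\notin\{\mathtt{1},\mathtt{D}\})$; - $(Tx)_i=\mathtt{D}$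 if $b\in\{\mathtt{1},\mathtt{D}\}\wedge c\in\{\mathtt{K},\mathtt{D}\}$. Notation ${}^{\infty}\mathtt{0}\,.\,u\,\mathtt{0}^{\infty}$ means the point whose coordinates $0,1,\dots,|u|-1$ spell the word $u$ and all other coordinates are $\mathtt{0}$; the dot marks coordinate $0$. *)

(* Defs.v *)
From Stdlib Require Import ZArith List.
Import ListNotations.
Open Scope Z_scope.
Open Scope bool_scope.

Inductive sym : Type := S0 | S1 | SG | SK | SP | SD.

Definition sym_eqb (x y : sym) : bool :=
  match x, y with
  | S0, S0 | S1, S1 | SG, SG | SK, SK | SP, SP | SD, SD => true
  | _, _ => false
  end.

Definition memb (x : sym) (l : list sym) : bool := existsb (sym_eqb x) l.

Definition config := Z -> sym.

(* The six clauses are pairwise disjoint; they leave the 8 triples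
   (D,G,_) and (D,{0,K},G) uncovered, for which we return P. *)
Definition local_rule (a b c : sym) : sym :=
  if (memb a [S0;SG;SK] && ((memb b [S0;SG;SK] && memb c [S0;S1;SP])
                             || (sym_eqb b SP && negb (memb c [S1;SD]))))
     || (memb a [S1;SD] && ((memb b [S0;SK] && memb c [S0;S1;SP])
                             || (sym_eqb b SP && negb (memb c [S1;SD]))))
  then S0
  else if memb b [S1;SD] && negb (memb c [SK;SD]) then S1
  else if (memb a [S0;SG;SK] && memb b [S0;SG;SK] && memb c [SG;SD])
          || (memb a [S1;SD] && memb b [S0;SK] && sym_eqb c SD)
  then SG
  else if (sym_eqb c SK && ((memb a [S0;SG;SK] && memb b [S0;SG;SK])
                            || (memb a [S1;SD] && memb b [S0;SK])))
          || (sym_eqb a SP && negb (memb b [S1;SD]) && memb c [S1;SD])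
          || (sym_eqb b SP && memb c [S1;SD])
  then SK
  else if (sym_eqb a S1 && ((memb b [S0;SK] && sym_eqb c SG) || sym_eqb b SG))
          || (sym_eqb a SP && negb (memb b [S1;SD]) && negb (memb c [S1;SD]))
  then SP
  else if memb b [S1;SD] && memb c [SK;SD] then SD
  else SP .

Definition pacman (x : config) : config :=
  fun i => local_rule (x (i - 1)) (x i) (x (i + 1)).

Definition pacman_iter (n : nat) (x : config) : config := Nat.iter n pacman x.

Definition xi (w : list sym) (i : nat) : config :=
  fun z =>
    let n := Z.of_nat (length w) in
    if (0 <=? z) && (z <? n) then nth (Z.to_nat z) w S0
    else if z =? n then S1
    else if z =? n + Z.of_nat i + 1 then SK
    else S0.

(* Main.v *)
Require Import Defs.
From Stdlib Require Import ZArith List Lia Arith Classical.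
Import ListNotations.
Module Aux.
Open Scope Z_scope.

Definition isdoor (s : sym) : bool := match s with S1 | SD => true | _ => false end.
Definition bgv (b : bool) : sym := if b then S1 else S0.
Definition X (t : nat) (x : config) : config := Nat.iter t pacman x.

Lemma X_S t x z : X (S t) x z = local_rule (X t x (z-1)) (X t x z) (X t x (z+1)).
Proof. reflexivity. Qed.

Lemma F1 a b c : local_rule a b c = SG -> c = SG \/ c = SD.
Proof. destruct a, b, c; vm_compute; intros H; try discriminate; auto. Qed.
Lemma F2 a b c : local_rule a b c = SP -> a = SP \/ (isdoor a = true /\ (b = SG \/ c = SG)).
Proof. destruct a, b, c; vm_compute; intros H; try discriminate; auto. Qed.
Lemma F3 a b c : local_rule a b c = SK -> c = SK \/ a = SP \/ b = SP.
Proof. destruct a, b, c; vm_compute; intros H; try discriminate; auto. Qed.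
Lemma F4 a b c : isdoor (local_rule a b c) = isdoor b.
Proof. destruct a, b, c; reflexivity. Qed.
Lemma F5 a b c : isdoor b = true -> (c = S0 \/ c = S1) -> local_rule a b c = S1.
Proof. intros H [-> | ->]; destruct a, b; try discriminate; reflexivity. Qed.
Definition ogk (s : sym) : bool := match s with S0 | SG | SK => true | _ => false end.
Lemma F6 a b c : ogk a = true -> ogk b = true -> ogk (local_rule a b c) = true.
Proof. destruct a, b, c; try discriminate; reflexivity. Qed.

Definition symall : list sym := [S0;S1;SG;SK;SP;SD].
Definition sym_eq (x y : sym) : bool := sym_eqb x y.
Definition nv_check : bool :=
  forallb (fun a => forallb (fun b => forallb (fun c => forallb (fun d => forallb (fun e =>
    negb (sym_eqb (local_rule a b c) (bgv (isdoor b)) && sym_eqb (local_rule b c d) (bgv (isdoor c))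
          && sym_eqb (local_rule c d e) (bgv (isdoor d))) || sym_eqb c (bgv (isdoor c)))
    symall) symall) symall) symall) symall.
Lemma nv_check_true : nv_check = true. Proof. vm_compute. reflexivity. Qed.
Lemma sym_eqb_eq x y : sym_eqb x y = true <-> x = y.
Proof. destruct x, y; simpl; split; intros; congruence. Qed.
Lemma in_symall s : In s symall. Proof. destruct s; simpl; tauto. Qed.

Lemma nonvanish_local a b c d e :
  local_rule a b c = bgv (isdoor b) -> local_rule b c d = bgv (isdoor c) ->
  local_rule c d e = bgv (isdoor d) -> c = bgv (isdoor c).
Proof.
  intros H1 H2 H3. pose proof nv_check_true as H. unfold nv_check in H.
  rewrite forallb_forall in H; specialize (H a (in_symall _)).
  rewrite forallb_forall in H; specialize (H b (in_symall _)).
  rewrite forallb_forall in H; specialize (H c (in_symall _)).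
  rewrite forallb_forall in H; specialize (H d (in_symall _)).
  rewrite forallb_forall in H; specialize (H e (in_symall _)).
  rewrite H1, H2, H3 in H.
  assert (E : forall s, sym_eqb s s = true) by (destruct s; reflexivity).
  rewrite !E in H. simpl in H. apply sym_eqb_eq; exact H.
Qed.

Lemma door_inv x t z : isdoor (X t x z) = isdoor (x z).
Proof. revert z; induction t; intros z; [reflexivity|]. rewrite X_S, F4. apply IHt. Qed.

Lemma neg_inv x : (forall z, z < 0 -> ogk (x z) = true) ->
  forall t z, z < 0 -> ogk (X t x z) = true.
Proof.
  intros H t; induction t; intros z Hz; [apply H; exact Hz|].
  rewrite X_S; apply F6; apply IHt; lia.
Qed.

Section Seg.
Variable x : config.
Variables a b : Z.
Variable t1 : nat.
Hypothesis Hab : a < b.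
Hypothesis Hnd : forall z, a < z < b -> isdoor (x z) = false.
Hypothesis HaP : forall t, X t x a <> SP.
Hypothesis Hb : forall t, (t1 <= t)%nat -> X t x b = S1.

Lemma ndt t z : a < z < b -> isdoor (X t x z) = false.
Proof. intros; rewrite door_inv; auto. Qed.

Lemma phaseG : forall k : nat, forall t, (t1 + k <= t)%nat -> forall p, a < p < b -> b - Z.of_nat k <= p -> X t x p <> SG.
Proof.
  induction k; intros t Ht p Hp Hk.
  - lia.
  - destruct t as [|t']; [lia|]. rewrite X_S. intros E. apply F1 in E.
    destruct (Z.eq_dec (p+1) b) as [Eb|Eb].
    + rewrite Eb, Hb in E by lia. destruct E; discriminate.
    + destruct E as [E|E].
      * apply (IHk t' ltac:(lia) (p+1) ltac:(lia) ltac:(lia)); exact E.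
      * pose proof (ndt t' (p+1) ltac:(lia)) as N. rewrite E in N; discriminate.
Qed.

Definition tG := (t1 + Z.to_nat (b - a))%nat.
Lemma Gfree t p : (tG <= t)%nat -> a < p < b -> X t x p <> SG.
Proof. intros; eapply (phaseG (Z.to_nat (b-a))); unfold tG in *; try lia. Qed.
Lemma Gfree' t p : (tG <= t)%nat -> a < p <= b -> X t x p <> SG.
Proof.
  intros H1 H2. destruct (Z.eq_dec p b) as [->|]. rewrite Hb. discriminate. unfold tG in *; lia.
  apply Gfree; auto; lia.
Qed.

Lemma phaseP : forall k : nat, forall t, (tG + k <= t)%nat -> forall p, a < p < b -> p <= a + Z.of_nat k -> X t x p <> SP.
Proof.
  induction k; intros t Ht p Hp Hk.
  - lia.
  - destruct t as [|t']; [lia|]. rewrite X_S. intros E. apply F2 in E.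
    destruct E as [E|[D [E|E]]].
    + destruct (Z.eq_dec (p-1) a) as [Ea|Ea].
      * rewrite Ea in E. apply (HaP t'); exact E.
      * apply (IHk t' ltac:(lia) (p-1) ltac:(lia) ltac:(lia)); exact E.
    + apply (Gfree t' p); auto; lia.
    + apply (Gfree' t' (p+1)); auto; lia.
Qed.

Definition tP := (tG + Z.to_nat (b - a))%nat.
Lemma Pfree t p : (tP <= t)%nat -> a < p < b -> X t x p <> SP.
Proof. intros; eapply (phaseP (Z.to_nat (b-a))); unfold tP in *; try lia. Qed.
Lemma Pfree' t p : (tP <= t)%nat -> a <= p < b -> X t x p <> SP.
Proof.
  intros H1 H2. destruct (Z.eq_dec p a) as [->|]. apply HaP. apply Pfree; auto; lia.
Qed.

Lemma phaseK : forall k : nat, forall t, (tP + k <= t)%nat -> forall p, a < p < b -> b - Z.of_nat k <= p -> X t x p <> SK.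
Proof.
  induction k; intros t Ht p Hp Hk.
  - lia.
  - destruct t as [|t']; [lia|]. rewrite X_S. intros E. apply F3 in E.
    destruct E as [E|[E|E]].
    + destruct (Z.eq_dec (p+1) b) as [Eb|Eb].
      * rewrite Eb, Hb in E by (unfold tP, tG in *; lia). discriminate.
      * apply (IHk t' ltac:(lia) (p+1) ltac:(lia) ltac:(lia)); exact E.
    + apply (Pfree' t' (p-1)); auto; lia.
    + apply (Pfree' t' p); auto; lia.
Qed.

Lemma segment : exists T, forall t, (T <= t)%nat -> forall z, a < z < b -> X t x z = S0.
Proof.
  exists (tP + Z.to_nat (b - a))%nat. intros t Ht z Hz.
  pose proof (phaseK (Z.to_nat (b-a)) t Ht z Hz ltac:(lia)) as HK.
  assert (HP : X t x z <> SP) by (apply Pfree; auto; lia).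
  assert (HG : X t x z <> SG) by (apply Gfree; auto; unfold tP in *; lia).
  pose proof (ndt t z Hz) as HD.
  destruct (X t x z); try reflexivity; try discriminate; congruence.
Qed.
End Seg.

Lemma last_door (f : Z -> bool) : forall (k : nat) lo b, Z.to_nat (b - lo) = k -> lo <= b ->
  (forall z, lo <= z < b -> f z = false) \/
  exists a, lo <= a < b /\ f a = true /\ forall z, a < z < b -> f z = false.
Proof.
  induction k; intros lo b Hk Hlb.
  - left; intros; lia.
  - destruct (f (b-1)) eqn:E.
    + right; exists (b-1); split; [lia|split; auto]; intros; lia.
    + destruct (IHk lo (b-1) ltac:(lia) ltac:(lia)) as [H|[a [H1 [H2 H3]]]].
      * left; intros z Hz. destruct (Z.eq_dec z (b-1)) as [->|]; auto. apply H; lia.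
      * right; exists a; split; [lia|split; auto]. intros z Hz.
        destruct (Z.eq_dec z (b-1)) as [->|]; auto. apply H3; lia.
Qed.

Section Casc.
Variable x : config.
Variable lo : Z.
Hypothesis Hlo : lo <= 0.
Hypothesis Hneg : forall z, z < 0 -> ogk (x z) = true.
Definition bg z := bgv (isdoor (x z)).

Lemma negP t z : z < 0 -> X t x z <> SP.
Proof. intros Hz E. pose proof (neg_inv x Hneg t z Hz) as H. rewrite E in H; discriminate. Qed.

Lemma cascade : forall m : nat, forall b, (Z.to_nat (b - lo) <= m)%nat -> lo <= b ->
  isdoor (x b) = true -> (exists t1, forall t, (t1 <= t)%nat -> X t x b = S1) ->
  exists T, forall t, (T <= t)%nat -> forall z, lo <= z < b -> X t x z = bg z.
Proof.
  induction m; intros b Hm Hlb Hdb [t1 Ht1].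
  - exists O; intros; lia.
  - destruct (last_door (fun z => isdoor (x z)) _ lo b eq_refl Hlb) as [H|[a [Ha1 [Ha2 Ha3]]]].
    + destruct (segment x (lo-1) b t1 ltac:(lia)) as [T HT].
      * intros z Hz. destruct (Z.eq_dec z (lo - 1)); [lia|]. apply H; lia.
      * intros t; apply negP; lia.
      * exact Ht1.
      * exists T; intros t Ht z Hz. unfold bg. rewrite H by lia. apply HT; auto; lia.
    + destruct (segment x a b t1 ltac:(lia) Ha3) as [T HT].
      * intros t E. pose proof (door_inv x t a) as D. rewrite E, Ha2 in D; discriminate.
      * exact Ht1.
      * assert (Qa : forall t, (S (Nat.max T t1) <= t)%nat -> X t x a = S1).
        { intros t Ht. destruct t as [|t']; [lia|]. rewrite X_S. apply F5.
          rewrite door_inv; auto.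
          destruct (Z.eq_dec (a+1) b) as [E|E].
          - right; rewrite E; apply Ht1; lia.
          - left; apply HT; lia. }
        destruct (IHm a ltac:(lia) ltac:(lia) Ha2 (ex_intro _ _ Qa)) as [T' HT'].
        exists (Nat.max T' (S (Nat.max T t1))). intros t Ht z Hz.
        destruct (Z_lt_le_dec z a).
        { apply HT'; lia. }
        destruct (Z.eq_dec z a) as [->|].
        { unfold bg; rewrite Ha2. apply Qa; lia. }
        unfold bg; rewrite Ha3 by lia. apply HT; lia.
Qed.
End Casc.

Lemma locality : forall s y y' c, (forall z, c - Z.of_nat s <= z <= c + Z.of_nat s -> y z = y' z) ->
  X s y c = X s y' c.
Proof.
  induction s; intros y y' c H.
  - apply H; lia.
  - rewrite !X_S. f_equal; apply IHs; intros; apply H; lia.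
Qed.

Lemma nonvanish y : (forall z, pacman y z = bgv (isdoor (y z))) -> forall z, y z = bgv (isdoor (y z)).
Proof.
  intros H z. apply (nonvanish_local (y (z-2)) (y (z-1)) (y z) (y (z+1)) (y (z+2))).
  - rewrite <- (H (z-1)). unfold pacman. replace (z-1-1) with (z-2) by lia. replace (z-1+1) with z by lia. reflexivity.
  - rewrite <- (H z). reflexivity.
  - rewrite <- (H (z+1)). unfold pacman. replace (z+1-1) with z by lia. replace (z+1+1) with (z+2) by lia. reflexivity.
Qed.

Section Main.
Variable w : list sym.
Definition n := Z.of_nat (length w).
Definition Lc : config := fun z =>
  if (0 <=? z) && (z <? n) then nth (Z.to_nat z) w S0
  else if z =? n then S1 else S0.

Lemma Lc_neg z : z < 0 -> Lc z = S0.
Proof. intros H; unfold Lc. replace (0 <=? z) with false by (symmetry; apply Z.leb_gt; lia).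
  simpl. destruct (z =? n) eqn:E; auto. apply Z.eqb_eq in E. unfold n in E; lia. Qed.

Lemma Lc_negogk z : z < 0 -> ogk (Lc z) = true.
Proof. intros; rewrite Lc_neg; auto. Qed.

Lemma Lc_right z : n <= z -> Lc z = if z =? n then S1 else S0.
Proof. intros H; unfold Lc. replace (z <? n) with false by (symmetry; apply Z.ltb_ge; lia).
  rewrite Bool.andb_false_r. reflexivity. Qed.

Lemma R t z : n <= z -> X t Lc z = if z =? n then S1 else S0.
Proof.
  revert z; induction t; intros z Hz.
  - apply Lc_right; auto.
  - rewrite X_S. rewrite (IHt z Hz), (IHt (z+1)) by lia.
    destruct (Z.eqb_spec z n) as [->|Ne].
    + replace (n + 1 =? n) with false by (symmetry; apply Z.eqb_neq; lia).
      destruct (X t Lc (n-1)); reflexivity.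
    + replace (z + 1 =? n) with false by (symmetry; apply Z.eqb_neq; lia).
      rewrite (IHt (z-1)) by lia. destruct (z - 1 =? n); reflexivity.
Qed.

Lemma Xrel i : forall t, (t <= i)%nat -> forall z,
  X t (xi w i) z = if z =? n + 1 + Z.of_nat i - Z.of_nat t then SK else X t Lc z.
Proof.
  induction t; intros Ht z.
  - simpl. unfold xi, Lc. fold n.
    destruct ((0 <=? z) && (z <? n)) eqn:E1.
    + destruct (Z.eqb_spec z (n + 1 + Z.of_nat i - 0)); auto.
      apply Bool.andb_true_iff in E1; destruct E1 as [_ E1]; apply Z.ltb_lt in E1; lia.
    + destruct (Z.eqb_spec z n) as [->|].
      * destruct (Z.eqb_spec n (n + 1 + Z.of_nat i - 0)); auto; lia.
      * destruct (Z.eqb_spec z (n + Z.of_nat i + 1)), (Z.eqb_spec z (n + 1 + Z.of_nat i - 0)); auto; lia.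
  - rewrite !X_S. rewrite !IHt by lia.
    set (q := n + 1 + Z.of_nat i - Z.of_nat t).
    assert (Hq : n + 2 <= q) by (unfold q; lia).
    destruct (Z_le_gt_dec z n) as [Hz|Hz].
    + destruct (Z.eqb_spec (z-1) q); try lia.
      destruct (Z.eqb_spec z q); try lia.
      destruct (Z.eqb_spec (z+1) q); try lia.
      destruct (Z.eqb_spec z (n + 1 + Z.of_nat i - Z.of_nat (S t))); try lia.
      reflexivity.
    + rewrite (R t z) by lia. rewrite (R t (z+1)) by lia.
      rewrite (R t (z-1)) by lia.
      replace (z =? n) with false by (symmetry; apply Z.eqb_neq; lia).
      replace (z + 1 =? n) with false by (symmetry; apply Z.eqb_neq; lia).
      replace (n + 1 + Z.of_nat i - Z.of_nat (S t)) with (q - 1) by (unfold q; lia).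
      destruct (Z.eqb_spec z (q-1)) as [E|E].
      * replace (z+1 =? q) with true by (symmetry; apply Z.eqb_eq; lia).
        replace (z =? q) with false by (symmetry; apply Z.eqb_neq; lia).
        replace (z - 1 =? q) with false by (symmetry; apply Z.eqb_neq; lia).
        destruct (z - 1 =? n); reflexivity.
      * replace (z+1 =? q) with false by (symmetry; apply Z.eqb_neq; lia).
        destruct (z - 1 =? q), (z =? q), (z - 1 =? n); reflexivity.
Qed.

Definition Cinj : config := fun z => if z =? n + 1 then SK else bgv (isdoor (Lc z)).

Lemma Cinj_door z : isdoor (Cinj z) = isdoor (Lc z).
Proof. unfold Cinj. destruct (Z.eqb_spec z (n+1)) as [->|].
  rewrite Lc_right by lia. replace (n+1 =? n) with false by (symmetry; apply Z.eqb_neq; lia). reflexivity.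
  destruct (isdoor (Lc z)); reflexivity. Qed.

Lemma Cinj_right t z : (1 <= t)%nat -> n < z -> X t Cinj z = S0.
Proof.
  intros Ht; revert z; induction t; [lia|]. intros z Hz. rewrite X_S.
  destruct t as [|t'].
  - simpl. unfold Cinj.
    rewrite !Lc_right by lia.
    destruct (Z.eqb_spec (z-1) (n+1)), (Z.eqb_spec z (n+1)), (Z.eqb_spec (z+1) (n+1)); try lia;
    destruct (Z.eqb_spec (z - 1) n), (Z.eqb_spec z n), (Z.eqb_spec (z+1) n); try lia; reflexivity.
  - rewrite (IHt ltac:(lia) z Hz), (IHt ltac:(lia) (z+1)) by lia.
    destruct (Z.eq_dec (z-1) n) as [E|E].
    + pose proof (door_inv Cinj (S t') (z-1)) as D. rewrite Cinj_door, E, Lc_right, Z.eqb_refl in D by lia.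
      rewrite E. destruct (X (S t') Cinj n); try discriminate; reflexivity.
    + rewrite (IHt ltac:(lia) (z-1)) by lia. reflexivity.
Qed.

Lemma Cinj_n t : (2 <= t)%nat -> X t Cinj n = S1.
Proof.
  intros Ht. destruct t as [|t]; [lia|]. rewrite X_S. apply F5.
  rewrite door_inv, Cinj_door, Lc_right, Z.eqb_refl by lia. reflexivity.
  left; apply Cinj_right; lia.
Qed.

Lemma part2 : exists s : nat, In (X s Cinj 0) [SG; SK; SD].
Proof.
  apply NNPP; intros Hc.
  assert (Hn : forall s, ~ In (X s Cinj 0) [SG; SK; SD]) by (intros s Hs; apply Hc; eauto).
  assert (Hneg0 : forall z, z < 0 -> Cinj z = S0).
  { intros z Hz; unfold Cinj. replace (z =? n+1) with false by (symmetry; apply Z.eqb_neq; unfold n in *; lia).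
    rewrite Lc_neg; auto. }
  assert (Hneg : forall t z, z < 0 -> X t Cinj z = S0).
  { induction t; intros z Hz; [apply Hneg0; auto|].
    rewrite X_S, !IHt by lia.
    destruct (Z.eq_dec (z+1) 0) as [E|E].
    - rewrite E. specialize (Hn t). destruct (X t Cinj 0); simpl in *; try reflexivity; tauto.
    - rewrite IHt by lia. reflexivity. }
  assert (Hng : forall z, z < 0 -> ogk (Cinj z) = true) by (intros; rewrite Hneg0; auto).
  destruct (cascade Cinj 0 ltac:(lia) Hng (Z.to_nat (n - 0)) n ltac:(lia) ltac:(unfold n; lia))
    as [T HT].
  { rewrite Cinj_door, Lc_right, Z.eqb_refl by lia; reflexivity. }
  { exists 2%nat; apply Cinj_n. }
  assert (Hall : forall z, X (Nat.max T 2) Cinj z = bgv (isdoor (Lc z))).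
  { intros z. destruct (Z_lt_le_dec z 0).
    - rewrite Hneg, Lc_neg by auto; reflexivity.
    - destruct (Z_lt_le_dec z n).
      + rewrite HT by lia. unfold bg. rewrite Cinj_door. reflexivity.
      + destruct (Z.eq_dec z n) as [->|].
        * rewrite Cinj_n by lia. rewrite Lc_right, Z.eqb_refl by lia; reflexivity.
        * rewrite Cinj_right by lia. rewrite Lc_right by lia.
          replace (z =? n) with false by (symmetry; apply Z.eqb_neq; lia); reflexivity. }
  assert (Back : forall t, (forall z, X t Cinj z = bgv (isdoor (Lc z))) -> forall z, Cinj z = bgv (isdoor (Lc z))).
  { induction t; intros H; [exact H|]. apply IHt. intros z.
    assert (H' : forall z, pacman (X t Cinj) z = bgv (isdoor (X t Cinj z))).
    { intros z'. rewrite door_inv, Cinj_door. apply H. }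
    rewrite (nonvanish _ H' z). rewrite door_inv, Cinj_door. reflexivity. }
  pose proof (Back _ Hall (n+1)) as E. unfold Cinj in E. rewrite Z.eqb_refl in E.
  destruct (isdoor (Lc (n+1))); discriminate.
Qed.
End Main.

End Aux.
Import Aux.
Theorem mainTheorem1 (w : list sym) (Hw : w <> []) :
  exists N M : nat, forall j : nat,
    In (pacman_iter (N + j) (xi w (M + j)) 0%Z) [SG; SK; SD].
Proof.
  destruct (part2 w) as [s Hs].
  destruct (cascade (Lc w) (- Z.of_nat s) ltac:(lia) (Lc_negogk w) (Z.to_nat (n w + Z.of_nat s)) (n w)
     ltac:(lia) ltac:(unfold n; lia)) as [T HT].
  { rewrite Lc_right, Z.eqb_refl by lia; reflexivity. }
  { exists O; intros t _. rewrite R, Z.eqb_refl by lia; reflexivity. }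
  exists (s + T)%nat, T. intros j.
  unfold pacman_iter. replace (s + T + j)%nat with (s + (T + j))%nat by lia.
  rewrite Nat.iter_add. fold (X s (Nat.iter (T + j) pacman (xi w (T + j)))).
  fold (X (T+j) (xi w (T + j))).
  erewrite locality; [exact Hs|].
  intros z Hz. rewrite Xrel by lia.
  replace (n w + 1 + Z.of_nat (T + j) - Z.of_nat (T + j)) with (n w + 1) by lia.
  unfold Cinj. destruct (z =? n w + 1) eqn:E; auto.
  destruct (Z_lt_le_dec z (n w)).
  - rewrite HT by lia. reflexivity.
  - rewrite R by lia. rewrite Lc_right by lia. destruct (z =? n w); reflexivity.
Qed.
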